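(* The algebra $(\mathcal{T}_\bullet,\overline{\ast})$ is a free associative algebra, freely generated by the set of non-empty reduced set compositions in $\mathsf{Comp}=\bigcup_{n\ge0}\mathsf{Comp}_n$.
   Context: $[n]=\{1,\ldots,n\}$. A set composition of $[n]$ is a tuple $(P_1,\ldots,P_k)$ of pairwise disjoint non-empty subsets with union $[n]$; $\mathsf{Comp}_n$ is the set of them ($\mathsf{Comp}_0$ consists of the empty tuple). $\mathcal{T}_n$ is the free $\mathbb{Z}$-module on $\mathsf{Comp}_n$ and $\mathcal{T}_\bullet=\bigoplus_{n\ge0}\mathcal{T}_n$. The restricted product is defined bilinearly by $(P_1,\ldots,P_k)\,\overline{\ast}\,(Q_1,\ldots,Q_l)=(P_1,\ldots,P_k,p+Q_1,\ldots,p+Q_l)$ for $(P_1,\ldots,P_k)\in\mathsf{Comp}_p$, $(Q_1,\ldots,Q_l)\in\mathsf{Comp}_q$, where $p+X=\{p+x:x\in X\}$; its unit is the empty tuple. A set composition $(P_1,\ldots,P_k)\in\mathsf{Comp}_n$ is reduced if there is no pair $(a,m)$ with $1\le a<k$ and $m<n$ such that $P_1\cup\cdots\cup P_a=[m]$. *)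

(* Defs.v *)
From HB Require Import structures.
From mathcomp Require Import all_boot all_order all_algebra.
From mathcomp Require Import finmap.
From mathcomp Require Import freeg.
Set Implicit Arguments. Unset Strict Implicit. Unset Printing Implicit Defensive.
Import Order.TTheory GRing.Theory Num.Theory.
Local Open Scope ring_scope.
Local Open Scope fset_scope.

Definition rawcomp := (nat * seq {fset nat})%type.

Definition fset_upto (n : nat) : {fset nat} := [fset i | i in iota 1 n].

Definition is_setcomp (c : rawcomp) : bool :=
  [&& all (fun P : {fset nat} => P != fset0) c.2,
      pairwise (fun P Q : {fset nat} => [disjoint P & Q]) c.2
    & (\bigcup_(P <- c.2) P) == fset_upto c.1].

(* Comp = union over n of Comp_n; an element records its n. *)
Definition Comp := {c : rawcomp | is_setcomp c}.

Definition comp_n (c : Comp) : nat := (val c).1.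
Definition comp_blocks (c : Comp) : seq {fset nat} := (val c).2.

Lemma is_setcomp_empty : is_setcomp (0%N, [::]).
Proof.
rewrite /is_setcomp /= big_nil; apply/eqP/fsetP => x.
by rewrite /fset_upto /= !inE.
Qed.
Definition comp_empty : Comp := exist _ (0%N, [::]) is_setcomp_empty.

Definition shift_fset (p : nat) (X : {fset nat}) : {fset nat} :=
  [fset (p + x)%N | x in X].

Definition rawcomp_mul (c d : rawcomp) : rawcomp :=
  ((c.1 + d.1)%N, c.2 ++ map (shift_fset c.1) d.2).

(* On Comp (the raw product of two set compositions is a set composition,
   so [insubd] never uses its default). *)
Definition comp_mul (c d : Comp) : Comp :=
  insubd comp_empty (rawcomp_mul (val c) (val d)).

Definition comp_nonempty (c : Comp) : bool := (0 < size (comp_blocks c))%N.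

Definition comp_reduced (c : Comp) : bool :=
  ~~ [exists a : 'I_(size (comp_blocks c)), exists m : 'I_(comp_n c),
        (0 < a)%N && ((\bigcup_(P <- take a (comp_blocks c)) P)
                        == fset_upto m)].

Definition T := {freeg Comp / int}.

Definition T_basis (c : Comp) : T := << c >>.

Definition T_mul (x y : T) : T :=
  fglift (fun a : Comp => fglift (fun b : Comp => T_basis (comp_mul a b)) y) x.

Definition T_one : T := T_basis comp_empty.

Definition monomial (A : Type) (I : Type) (mul : A -> A -> A) (one : A)
  (gen : I -> A) (w : seq I) : A :=
  foldr (fun i acc => mul (gen i) acc) one w.

(* (A, mul, one) is a (unital) associative Z-algebra which is free
   associative, freely generated by the family gen restricted to S:
   the noncommutative monomials in the generators from S form a Z-basis
   of A (spanning + linear independence). *)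
Definition free_assoc_algebra (A : lmodType int) (mul : A -> A -> A) (one : A)
  (I : choiceType) (gen : I -> A) (S : pred I) : Prop :=
  [/\
      [/\ associative mul, left_id one mul & right_id one mul],
      (forall (c : int) (x y z : A), (mul (c *: x + y) z = c *: mul x z + mul y z)%R),
      (forall (c : int) (x y z : A), (mul z (c *: x + y) = c *: mul z x + mul z y)%R),
      (forall x : A, exists l : {freeg (seq I) / int},
          all (all S) (dom l) /\ x = fglift (monomial mul one gen) l)
    &
      (forall l : {freeg (seq I) / int},
          all (all S) (dom l) -> fglift (monomial mul one gen) l = 0%R -> l = 0%R)].

(* Main.v *)
Require Import Defs.
From HB Require Import structures.
From mathcomp Require Import all_boot all_order all_algebra.
From mathcomp Require Import finmap.
From mathcomp Require Import freeg.
From mathcomp Require Import zify.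
Set Implicit Arguments. Unset Strict Implicit. Unset Printing Implicit Defensive.
Local Open Scope fset_scope.

Lemma in_upto n x : (x \in fset_upto n) = (0 < x <= n)%N.
Proof.
apply/imfsetP/idP => [[y]|h]; first by rewrite /= mem_iota => /andP[h1 h2] ->; lia.
by exists x => //=; rewrite mem_iota; lia.
Qed.

Lemma in_shift p X x : (x \in shift_fset p X) = (p <= x)%N && ((x - p)%N \in X).
Proof.
apply/imfsetP/idP => [[y /= yX ->]|/andP[h1 h2]].
  by rewrite leq_addr /= addKn.
by exists (x - p)%N => //; rewrite subnKC.
Qed.

Lemma in_bigcup x (s : seq {fset nat}) :
  (x \in \bigcup_(P <- s) P) = has (fun P => x \in P) s.
Proof.
elim: s => [|P s IH]; first by rewrite big_nil inE.
by rewrite big_cons inE IH.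
Qed.

Lemma shift_fset0 X : shift_fset 0 X = X.
Proof. by apply/fsetP => x; rewrite in_shift subn0. Qed.

Lemma shift_fsetD p q X : shift_fset p (shift_fset q X) = shift_fset (p + q) X.
Proof.
apply/fsetP => x; rewrite !in_shift.
case: (leqP p x) => h /=; last by apply/esym/negbTE; lia.
rewrite subnDA; case: (leqP q (x - p)) => h2 /=; last by apply/esym/negbTE; lia.
by rewrite (_ : (p + q <= x)%N = true) //; lia.
Qed.

Lemma shift_fset_inj p : injective (shift_fset p).
Proof.
move=> X Y e; apply/fsetP => x.
have := congr1 (fun Z => (p + x)%N \in Z) e; rewrite /= !in_shift leq_addr /=.
by rewrite addKn.
Qed.

Lemma shift_nonempty p X : (shift_fset p X != fset0) = (X != fset0).
Proof.
apply/idP/idP; apply: contra => /eqP E; apply/eqP/fsetP => x; rewrite inE.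
  by rewrite E in_shift inE andbF.
apply/negbTE; have := congr1 (fun Z => (p + x)%N \in Z) E.
by rewrite /= in_shift leq_addr addKn inE /= => ->.
Qed.

Lemma cupP (s : seq {fset nat}) n :
  reflect (forall x, has (fun P => x \in P) s = (0 < x <= n)%N)
          (\bigcup_(P <- s) P == fset_upto n).
Proof.
apply: (iffP eqP) => [E x|H]; first by rewrite -in_bigcup E in_upto.
by apply/fsetP => x; rewrite in_bigcup in_upto H.
Qed.

Lemma setcompP (c : rawcomp) :
  reflect [/\ all (fun P : {fset nat} => P != fset0) c.2,
      pairwise (fun P Q : {fset nat} => [disjoint P & Q]) c.2
    & forall x, has (fun P => x \in P) c.2 = (0 < x <= c.1)%N] (is_setcomp c).
Proof.
apply: (iffP and3P) => [[h1 h2 /cupP h3]|[h1 h2 h3]]; split => //.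
by apply/cupP.
Qed.

Lemma setcomp_le (c : rawcomp) P x : is_setcomp c -> P \in c.2 -> x \in P -> (0 < x <= c.1)%N.
Proof.
move=> /setcompP[_ _ h] PI xP; rewrite -h; apply/(@hasP _ (fun Q : {fset nat} => x \in Q)); by exists P.
Qed.

Lemma setcomp_mul c d : is_setcomp c -> is_setcomp d -> is_setcomp (rawcomp_mul c d).
Proof.
case: c => p s; case: d => q t hc hd.
have hc' := setcomp_le hc; have hd' := setcomp_le hd.
case/setcompP: hc => /= a1 a2 a3; case/setcompP: hd => /= b1 b2 b3.
apply/setcompP; rewrite /rawcomp_mul /=; split.
- rewrite all_cat a1 /= all_map; apply/allP => Q Qt /=.
  by rewrite shift_nonempty (allP b1).
- rewrite pairwise_cat a2 pairwise_map /=; apply/andP; split.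
    apply/allrelP => P Q Ps /mapP[Q' Q't ->]; apply/fdisjointP => x xP.
    rewrite in_shift; have := hc' _ x Ps xP => /= h.
    by apply/negP => /andP[hh hq]; have := hd' _ _ Q't hq; rewrite /=; lia.
  apply: sub_pairwise b2 => P Q /fdisjointP h; apply/fdisjointP => x.
  rewrite !in_shift => /andP[-> /h] //.
- move=> x; rewrite has_cat has_map /=.
  rewrite a3; case: (leqP x p) => hx /=.
    rewrite andbT; case: (posnP x) => [->|xp] /=; last by apply/esym; lia.
    apply/negbTE/hasPn => Q Qt /=; rewrite in_shift; apply/negP => /andP[_ hq].
    by have := hd' _ _ Qt hq; rewrite /=; lia.
  rewrite andbF /= (eq_has (a2 := fun Q => (x - p)%N \in Q)); last first.
    by move=> Q /=; rewrite in_shift ltnW.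
  rewrite b3; lia.
Qed.

Lemma val_mul (a b : Comp) : val (comp_mul a b) = rawcomp_mul (val a) (val b).
Proof. by rewrite /comp_mul insubdK //; apply: setcomp_mul; apply: valP. Qed.

Lemma comp_mulA : associative comp_mul.
Proof.
move=> a b c; apply: val_inj; rewrite !val_mul /rawcomp_mul /=.
rewrite addnA map_cat catA -!map_comp; congr (_, _ ++ _).
by apply: eq_map => X /=; rewrite shift_fsetD.
Qed.

Lemma comp_mul1l : left_id comp_empty comp_mul.
Proof.
move=> a; apply: val_inj; rewrite val_mul /rawcomp_mul /=.
case: (val a) => n s /=; rewrite (eq_map shift_fset0) map_id //.
Qed.

Lemma comp_mul1r : right_id comp_empty comp_mul.
Proof.
move=> a; apply: val_inj; rewrite val_mul /rawcomp_mul /=.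
by case: (val a) => n s /=; rewrite addn0 cats0.
Qed.

Lemma upto_inj n m : fset_upto n = fset_upto m -> n = m.
Proof.
move=> E; have h1 := congr1 (fun Z => n \in Z) E; have h2 := congr1 (fun Z => m \in Z) E.
move: h1 h2; rewrite /= !in_upto.
case: n m E => [|n] [|m] //= E; lia.
Qed.

Lemma split_disj (c : rawcomp) k P Q x : is_setcomp c ->
  P \in take k c.2 -> Q \in drop k c.2 -> x \in P -> x \notin Q.
Proof.
case/setcompP => _ h _ Pt Qd xP.
move: h; rewrite -(cat_take_drop k c.2) pairwise_cat => /and3P[/allrelP h _ _].
by have /fdisjointP := h _ _ Pt Qd; apply.
Qed.

Lemma setcomp_n n m s : is_setcomp (n, s) -> is_setcomp (m, s) -> n = m.
Proof. by case/and3P => _ _ /eqP /= E1 /and3P[_ _ /eqP /=]; rewrite E1; apply: upto_inj. Qed.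

Definition SS (c : Comp) := comp_nonempty c && comp_reduced c.

Lemma head_eq a b x y : SS a -> SS b -> comp_mul a x = comp_mul b y -> a = b.
Proof.
wlog h : a b x y / (size (comp_blocks a) <= size (comp_blocks b))%N.
  move=> W Sa Sb E; case: (leqP (size (comp_blocks a)) (size (comp_blocks b))) => hh.
    exact: W hh Sa Sb E.
  by apply/esym; apply: W Sb Sa (esym E); apply: ltnW.
case/andP => nea _ /andP[_ rb] E.
have E2 := congr1 (fun c => (val c).2) E; move: E2 => /=; rewrite !val_mul /rawcomp_mul /=.
move=> E2.
have Etake := congr1 (take (size (comp_blocks a))) E2.
move: Etake; rewrite take_size_cat // takel_cat // => Etake.
rewrite /comp_nonempty /comp_reduced /comp_n /comp_blocks in h nea rb Etake E2 *.
clear E; case: a Etake h nea E2 => [[na sa] ha]; case: b rb => [[nb sb] hb] /=.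
move=> rb Etake h nea E2.
case: (ltngtP (size sa) (size sb)) h => // hlt _; last first.
  move: Etake; rewrite hlt take_size => Esab; subst sa.
  have Enab := setcomp_n ha hb; subst na.
  by apply: val_inj.
exfalso; move/negP: rb; apply.
have ha' := setcomp_le ha; have hb' := setcomp_le hb.
have Hu : \bigcup_(P <- take (size sa) sb) P = fset_upto na.
  by rewrite -Etake; case/and3P: ha => _ _ /eqP.
have Hlt : (na < nb)%N.
  have Qin : nth fset0 sb (size sa) \in drop (size sa) sb.
    by rewrite (drop_nth fset0 hlt) mem_head.
  have : nth fset0 sb (size sa) != fset0.
    by case/and3P: hb => /allP /= H _ _; apply: H; rewrite mem_nth.
  case/fset0Pn => z zQ.
  have := hb' _ z (mem_nth fset0 hlt) zQ => /= /andP[z0 zb].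
  rewrite (leq_trans _ zb) // ltnNge; apply/negP => zna.
  have : z \in \bigcup_(P <- take (size sa) sb) P by rewrite Hu in_upto z0 zna.
  rewrite in_bigcup => /(@hasP _ (fun Q : {fset nat} => z \in Q))[P Pin zP].
  by have := split_disj hb Pin Qin zP; rewrite zQ.
apply/existsP; exists (Ordinal hlt); apply/existsP; exists (Ordinal Hlt) => /=.
by rewrite nea Hu eqxx.
Qed.

Lemma comp_cancel a x y : comp_mul a x = comp_mul a y -> x = y.
Proof.
move=> E; have := congr1 val E; rewrite !val_mul /rawcomp_mul.
case: x y {E} => [[nx tx] hx] [[ny ty] hy] /= [] /addnI E1.
move/(congr1 (drop (size (val a).2))); rewrite !drop_size_cat //.
move/(inj_map (@shift_fset_inj _)) => E2; subst; exact: val_inj.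
Qed.

Lemma mul_neq_empty b x : SS b -> comp_mul b x <> comp_empty.
Proof.
case/andP => nb _ E; have := congr1 (fun c => size (val c).2) E.
rewrite val_mul /= size_cat; rewrite /comp_nonempty /comp_blocks in nb; move: nb; rewrite /val /=; lia.
Qed.

Definition prodw (w : seq Comp) : Comp := foldr comp_mul comp_empty w.

Lemma prodw_inj w1 w2 : all SS w1 -> all SS w2 -> prodw w1 = prodw w2 -> w1 = w2.
Proof.
elim: w1 w2 => [|a w1 IH] [|b w2] //=.
- by move=> _ /andP[Sb _] /esym E; case: (mul_neq_empty Sb E).
- by move=> /andP[Sa _] _ E; case: (mul_neq_empty Sa E).
move=> /andP[Sa S1] /andP[Sb S2] E.
have Eab := head_eq Sa Sb E; subst b.
by rewrite (IH w2 S1 S2 (comp_cancel E)).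
Qed.

Lemma prodw_cat w1 w2 : prodw (w1 ++ w2) = comp_mul (prodw w1) (prodw w2).
Proof.
elim: w1 => [|a w1 IH] /=; first by rewrite comp_mul1l.
by rewrite IH comp_mulA.
Qed.

Definition unshift (m : nat) (X : {fset nat}) : {fset nat} := [fset (x - m)%N | x in X].

Lemma in_unshift m X z : (forall x, x \in X -> m < x)%N ->
  (z \in unshift m X) = (0 < z)%N && ((z + m)%N \in X).
Proof.
move=> H; apply/imfsetP/idP => [[x /= xX ->]|/andP[z0 zX]].
  have hx := H _ xX; rewrite subnK; last exact: ltnW.
  by rewrite xX andbT subn_gt0.
by exists (z + m)%N => //; rewrite addnK.
Qed.

Lemma shift_unshift m X : (forall x, x \in X -> m < x)%N -> shift_fset m (unshift m X) = X.
Proof.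
move=> H; apply/fsetP => x; rewrite in_shift in_unshift //.
case: (boolP (x \in X)) => xX.
  have hx := H _ xX; rewrite subnK; last exact: ltnW.
  by rewrite xX subn_gt0 hx ltnW.
case: (leqP m x) => //= hm; by rewrite subnK // (negbTE xX) andbF.
Qed.
Lemma split_raw n s a m : is_setcomp (n, s) -> (0 < a < size s)%N -> (m < n)%N ->
  \bigcup_(P <- take a s) P = fset_upto m ->
  [/\ is_setcomp (m, take a s), is_setcomp (n - m, map (unshift m) (drop a s))
    & rawcomp_mul (m, take a s) (n - m, map (unshift m) (drop a s)) = (n, s)].
Proof.
move=> hs ha hm Hu.
have hs' := setcomp_le hs.
have Hd : forall X x, X \in drop a s -> x \in X -> (m < x <= n)%N.
  move=> X x Xd xX; have := hs' X x (mem_drop Xd) xX => /= /andP[x0 xn].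
  rewrite xn andbT ltnNge; apply/negP => xm.
  have : x \in \bigcup_(P <- take a s) P by rewrite Hu in_upto x0 xm.
  rewrite in_bigcup => /(@hasP _ (fun Q : {fset nat} => x \in Q))[P Pin xP].
  by have := split_disj hs Pin Xd xP; rewrite xX.
have Hd' : forall X, X \in drop a s -> forall x, x \in X -> (m < x)%N.
  by move=> X Xd x xX; case/andP: (Hd X x Xd xX).
case/setcompP: (hs) => /= h1 h2 h3.
move: (h1); rewrite -{1}(cat_take_drop a s) all_cat => /andP[h1t h1d].
move: (h2); rewrite -{1}(cat_take_drop a s) pairwise_cat => /and3P[h2x h2t h2d].
split.
- by apply/and3P; split => //; rewrite Hu.
2: {
rewrite /rawcomp_mul /= (subnKC (ltnW hm)) -map_comp.
have -> : [seq (shift_fset m \o unshift m) i | i <- drop a s] = drop a s.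
  rewrite -{2}(map_id (drop a s)); apply/eq_in_map => X Xd /=.
  by apply: shift_unshift => x; apply: Hd'.
by rewrite cat_take_drop.
}
apply/setcompP => /=; split.
+ rewrite all_map; apply/allP => X Xd /=; apply/fset0Pn.
  case/fset0Pn: (allP h1d X Xd) => x xX; exists (x - m)%N.
  have hx := Hd' _ Xd _ xX.
  rewrite in_unshift; last exact: Hd'.
  by rewrite subnK ?(ltnW hx) // xX andbT subn_gt0.
+ rewrite pairwise_map; apply: (@sub_in_pairwise _ (mem (drop a s))) h2d; last by apply/allP.
  move=> X Y Xd Yd /fdisjointP H.
  apply/fdisjointP => z; rewrite in_unshift; last exact: Hd'.
  rewrite in_unshift; last exact: Hd'.
  by case/andP => -> /H.
+ move=> z; rewrite has_map /=.
  rewrite (eq_in_has (a2 := fun X : {fset nat} => (0 < z)%N && ((z + m)%N \in X))); last first.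
    by move=> X Xd /=; rewrite in_unshift //; apply: Hd'.
  case: (posnP z) => [->|z0] /=; first by elim: (drop a s).
  apply/idP/idP.
    case/(@hasP _ (fun X : {fset nat} => (z + m)%N \in X)) => X Xd zX.
    have := Hd X _ Xd zX; clear -hm; lia.
  move=> hz; have := h3 (z + m)%N.
  rewrite (_ : (0 < z + m <= n)%N); last by clear -hz hm z0; lia.
  rewrite -{1}(cat_take_drop a s) has_cat => /orP[|//].
  case/(@hasP _ (fun X : {fset nat} => (z + m)%N \in X)) => P Pt zP.
  have : (z + m)%N \in \bigcup_(P <- take a s) P.
    by rewrite in_bigcup; apply/(@hasP _ (fun X : {fset nat} => (z + m)%N \in X)); exists P.
  rewrite Hu in_upto; clear -z0; lia.
Qed.
Lemma exists_fact (c : Comp) : exists w, all SS w && (prodw w == c).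
Proof.
have [k] := ubnP (size (comp_blocks c)); elim: k c => // k IH c hk.
case: (posnP (size (comp_blocks c))) => [E0|ne].
  exists [::]; apply/eqP/val_inj => /=.
  case: c hk E0 => [[n s] hc] /= _; rewrite /comp_blocks /= => /size0nil E; subst s.
  by rewrite (setcomp_n hc is_setcomp_empty).
case: (boolP (comp_reduced c)) => red.
  by exists [:: c]; rewrite /= /SS /comp_nonempty ne red /= comp_mul1r eqxx.
move: red; rewrite negbK => /existsP[a /existsP[m /andP[a0 Hu]]].
case: c hk ne a m a0 Hu => [[n s] hc]; rewrite /comp_blocks /comp_n /= => hk ne a m a0 Hu.
have ha : (0 < a < size s)%N by rewrite a0 ltn_ord.
have [h1 h2 h3] := split_raw hc ha (ltn_ord m) (eqP Hu).
pose c1 : Comp := exist (fun c => is_setcomp c) _ h1; pose c2 : Comp := exist (fun c => is_setcomp c) _ h2.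
have E : exist _ (n, s) hc = comp_mul c1 c2 by apply: val_inj; rewrite val_mul /=.
have [w1 /andP[S1 /eqP E1]] : exists w, all SS w && (prodw w == c1).
  apply: IH; rewrite /comp_blocks /= size_take ltn_ord.
  by have := ltn_ord a; clear -hk; lia.
have [w2 /andP[S2 /eqP E2]] : exists w, all SS w && (prodw w == c2).
  apply: IH; rewrite /comp_blocks /= size_map size_drop.
  by have := ltn_ord a; clear -hk a0; lia.
by exists (w1 ++ w2); rewrite all_cat S1 S2 prodw_cat E1 E2 E eqxx.
Qed.
Local Open Scope ring_scope.
Import GRing.Theory.

Section FG.
Variable (K : choiceType).

Lemma fgU_scale (k : int) (x : K) : << k *g x >> = k *: << x >> :> {freeg K / int}.
Proof.
by apply/eqP/freeg_eqP => y; rewrite coeffZ !coeffU mulrA mulr1.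
Qed.

Lemma fglift_D (M : lmodType int) (f : K -> M) (x y : {freeg K / int}) :
  fglift f (x + y) = fglift f x + fglift f y.
Proof.
have h : forall x y, fglift f (x - y) = fglift f x - fglift f y.
  move=> a b; exact: (@lift_is_additive _ _ M f).
have h0 : fglift f 0 = 0 by have := h 0 0; rewrite subr0 subrr.
have hN z : fglift f (- z) = - fglift f z by rewrite -sub0r h h0 sub0r.
by have := h x (- y); rewrite opprK => ->; rewrite hN opprK.
Qed.

Lemma fglift0 (M : lmodType int) (f : K -> M) : fglift f 0 = 0.
Proof. by apply: (@addrI _ (fglift f 0)); rewrite -fglift_D !addr0. Qed.

Lemma lin_ext (M : lmodType int) (G H : {freeg K / int} -> M) :
  (forall c x y, G (c *: x + y) = c *: G x + G y) ->
  (forall c x y, H (c *: x + y) = c *: H x + H y) ->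
  (forall a, G << a >> = H << a >>) -> forall x, G x = H x.
Proof.
move=> hG hH hB; elim/freeg_ind_dom0 => [|k a D _ _ IH].
  have G0 : G 0 = 0.
    have e := hG 1 0 0; rewrite !scale1r !addr0 in e.
    by apply: (@addrI _ (G 0)); rewrite addr0 -e.
  have H0 : H 0 = 0.
    have e := hH 1 0 0; rewrite !scale1r !addr0 in e.
    by apply: (@addrI _ (H 0)); rewrite addr0 -e.
  by rewrite G0 H0.
by rewrite fgU_scale hG hH IH hB.
Qed.

Lemma fglift_Z (M : lmodType int) (f : K -> M) c x :
  fglift f (c *: x) = c *: fglift f x.
Proof.
elim/freeg_ind_dom0: x => [|k a D _ _ IH]; first by rewrite scaler0 fglift0 scaler0.
rewrite scalerDr !fglift_D IH scalerDr; congr (_ + _).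
have -> : c *: << k *g a >> = << c * k *g a >> by rewrite (fgU_scale k) (fgU_scale (c * k)) scalerA.
by rewrite !liftU scalerA.
Qed.

Lemma fglift_lin (M : lmodType int) (f : K -> M) c x y :
  fglift f (c *: x + y) = c *: fglift f x + fglift f y.
Proof. by rewrite fglift_D fglift_Z. Qed.

Lemma fglift_U (M : lmodType int) (f : K -> M) a : fglift f << a >> = f a.
Proof. by rewrite liftU scale1r. Qed.

Lemma fglift_id (x : {freeg K / int}) : fglift (fun a => << a >>) x = x.
Proof.
apply: (lin_ext (G := fglift _) (H := id)) => //; first exact: fglift_lin.
by move=> a; rewrite fglift_U.
Qed.


Lemma fglift_fun_lin (M : lmodType int) (A B : K -> M) c x :
  fglift (fun a => c *: A a + B a) x = c *: fglift A x + fglift B x.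
Proof.
apply: (lin_ext (G := fglift _) (H := fun x => c *: fglift A x + fglift B x)).
- exact: fglift_lin.
- move=> d y z; rewrite !fglift_lin !scalerDr !scalerA [c * d]mulrC; exact: addrACA.
by move=> a; rewrite !fglift_U.
Qed.

Lemma eq_fglift (M : lmodType int) (f g : K -> M) x : f =1 g -> fglift f x = fglift g x.
Proof.
move=> e; apply: (lin_ext (G := fglift _) (H := fglift _)); try exact: fglift_lin.
by move=> a; rewrite !fglift_U.
Qed.

Lemma fglift_sumE (M : lmodType int) (f : K -> M) x :
  fglift f x = \sum_(z <- dom x) coeff z x *: f z.
Proof.
rewrite -{1}[x]freeg_sumE; elim: (dom x) => [|z s IH]; first by rewrite !big_nil fglift0.
by rewrite !big_cons fglift_D IH liftU.
Qed.
End FG.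

Lemma fglift_comp (K : choiceType) (K2 : choiceType) (M : lmodType int) (g : K -> {freeg K2 / int})
  (f : K2 -> M) x :
  fglift f (fglift g x) = fglift (fun a => fglift f (g a)) x.
Proof.
apply: (lin_ext (G := fun x => fglift f (fglift g x)) (H := fglift _)).
- by move=> c y z /=; rewrite !fglift_lin.
- exact: fglift_lin.
by move=> a; rewrite !fglift_U.
Qed.
Local Open Scope ring_scope.
Import GRing.Theory.

Definition factor (c : Comp) : seq Comp := xchoose (exists_fact c).

Lemma factorP c : all SS (factor c) /\ prodw (factor c) = c.
Proof. by have /andP[h /eqP e] := xchooseP (exists_fact c). Qed.

Lemma factor_prodw w : all SS w -> factor (prodw w) = w.
Proof.
move=> h; case: (factorP (prodw w)) => h1 h2; exact: prodw_inj h1 h h2.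
Qed.

Lemma T_mulU a b : T_mul << a >> << b >> = << comp_mul a b >>.
Proof. by rewrite /T_mul !fglift_U. Qed.

Lemma T_mul_linl c x y z : T_mul (c *: x + y) z = c *: T_mul x z + T_mul y z.
Proof. by rewrite /T_mul fglift_lin. Qed.

Lemma T_mul_linr c x y z : T_mul z (c *: x + y) = c *: T_mul z x + T_mul z y.
Proof.
rewrite /T_mul -fglift_fun_lin; apply: eq_fglift => a; exact: fglift_lin.
Qed.

Lemma T_mulA : associative T_mul.
Proof.
move=> x y z; move: x.
apply: (lin_ext (G := fun x => T_mul x (T_mul y z)) (H := fun x => T_mul (T_mul x y) z)).
- by move=> c u v /=; rewrite T_mul_linl.
- by move=> c u v /=; rewrite !T_mul_linl.
move=> a /=; move: y.
apply: (lin_ext (G := fun y => T_mul << a >> (T_mul y z)) (H := fun y => T_mul (T_mul << a >> y) z)).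
- by move=> c u v /=; rewrite T_mul_linl T_mul_linr.
- by move=> c u v /=; rewrite T_mul_linr T_mul_linl.
move=> b /=; move: z.
apply: (lin_ext (G := fun z => T_mul << a >> (T_mul << b >> z)) (H := fun z => T_mul (T_mul << a >> << b >>) z)).
- by move=> c u v /=; rewrite !T_mul_linr.
- by move=> c u v /=; rewrite !T_mul_linr.
by move=> d /=; rewrite !T_mulU comp_mulA.
Qed.

Lemma T_mul1l : left_id T_one T_mul.
Proof.
apply: (lin_ext (G := fun x => T_mul T_one x) (H := id)).
- by move=> c u v /=; rewrite T_mul_linr.
- by [].
by move=> a /=; rewrite /T_one /T_basis T_mulU comp_mul1l.
Qed.

Lemma T_mul1r : right_id T_one T_mul.
Proof.
apply: (lin_ext (G := fun x => T_mul x T_one) (H := id)).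
- by move=> c u v /=; rewrite T_mul_linl.
- by [].
by move=> a /=; rewrite /T_one /T_basis T_mulU comp_mul1r.
Qed.

Lemma monomialE w : monomial T_mul T_one T_basis w = << prodw w >>.
Proof. by elim: w => [|a w IH] //=; rewrite IH /T_basis T_mulU. Qed.

Theorem proposition3p1 :
  free_assoc_algebra T_mul T_one T_basis
    (fun c : Comp => comp_nonempty c && comp_reduced c).
Proof.
split.
- by split; [exact: T_mulA | exact: T_mul1l | exact: T_mul1r].
- exact: T_mul_linl.
- exact: T_mul_linr.
- move=> x; exists (fglift (fun c => << factor c >>) x); split.
    apply/allP => w; rewrite mem_dom; apply: contraR => hw.
    rewrite /coeff fglift_comp.
    rewrite (@eq_fglift _ _ _ (fun _ => 0)); last first.
      move=> c; rewrite fglift_U; case: eqP => // E.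
      by case: (factorP c) => h _; rewrite E in h; rewrite h in hw.
    by rewrite fglift_sumE big1 // => i _; rewrite scaler0.
  rewrite fglift_comp -[LHS]fglift_id; apply: eq_fglift => c.
  by rewrite fglift_U monomialE; case: (factorP c) => _ ->.
- move=> l hl h0.
  have := congr1 (fglift (fun c => << factor c >>)) h0.
  rewrite fglift0 fglift_comp => E; rewrite -E.
  rewrite -[LHS]fglift_id !fglift_sumE big_seq [RHS]big_seq; apply: eq_bigr => w wd.
  rewrite monomialE fglift_U factor_prodw //; exact: (allP hl).
Qed.
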